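(* For any constants $\bar z\in[0,1]$ and $\bar\alpha>0$, the set $S_{\bar z,\bar\alpha}=\{(x_1,\dots,x_n)\in[0,1]^n:\max_{i\in\mathcal V}|x_i-\bar z|<\bar\alpha\}$ is finite-time robustly reachable from $[0,1]^n$ under control protocol (C6).
   Context: Fix $n\ge3$, $\mathcal V=\{1,\dots,n\}$, confidence thresholds $r_i\in(0,1]$, belief factors $\omega_i\in(0,1)$, $\eta>0$. States $x(t)\in[0,1]^n$. Neighbor set $\mathcal N_i(t)=\{j:|x_j(t)-x_i(t)|\le r_i\}$ (contains $i$), $\Pi_{[0,1]}(y)=\min\{1,\max\{0,y\}\}$, $x_{\rm ave}(t)=\frac1n\sum_ix_i(t)$. Control protocol (C6): $x_i(t+1)=\Pi_{[0,1]}\big(\omega_ix_{\rm ave}(t)+\frac{1-\omega_i}{|\mathcal N_i(t)|}[x_i(t)+\sum_{j\in\mathcal N_i(t)\setminus\{i\}}(x_j(t)+u_{ji}(t)+b_{ji}(t))]\big)$, where for $j\in\mathcal N_i(t)\setminus\{i\}$: $\delta_i(t)\in(0,\eta)$ is a chosen parameter, $u_{ji}(t)\in[-\eta+\delta_i(t),\eta-\delta_i(t)]$ a chosen control input, $b_{ji}(t)\in[-\delta_i(t),\delta_i(t)]$ an arbitrary uncertainty; the choices may depend on $x(0),\dots,x(t)$. A set $S\subseteq[0,1]^n$ is finite-time robustly reachable from $[0,1]^n$ under the protocol if there exist constants $T>0$ and $\varepsilon\in(0,\eta)$ such that for every $x(0)\in[0,1]^n$, either $x(0)\in S$, or one can choose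 $\delta_i(t)\in[\varepsilon,\eta)$ and $u_{ji}(t)\in[-\eta+\delta_i(t),\eta-\delta_i(t)]$ ($0\le t<T$, $i\in\mathcal V$, $j\in\mathcal N_i(t)\setminus\{i\}$) guaranteeing that for arbitrary $b_{ji}(t)\in[-\delta_i(t),\delta_i(t)]$ there is $t\in[1,T]$ with $x(t)\in S$. *)

(* Defs.v *)
(* classical reals. Vertices are indexed 0..n-1 (nat),
   states are functions nat -> R (values at indices >= n are irrelevant). *)
From Stdlib Require Import Reals List.
Import ListNotations.
Open Scope R_scope.

Fixpoint rsum (f : nat -> R) (m : nat) : R :=
  match m with
  | O => 0
  | S k => rsum f k + f k
  end.

Definition proj01 (y : R) : R := Rmin 1 (Rmax 0 y).

Definition xave (n : nat) (x : nat -> R) : R := rsum x n / INR n.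

Definition nbrb (r : nat -> R) (x : nat -> R) (i j : nat) : bool :=
  if Rle_dec (Rabs (x j - x i)) (r i) then true else false.

Definition onbrb (r : nat -> R) (x : nat -> R) (i j : nat) : bool :=
  andb (negb (Nat.eqb j i)) (nbrb r x i j).

Definition card_nbr (n : nat) (r : nat -> R) (x : nat -> R) (i : nat) : R :=
  rsum (fun j => if nbrb r x i j then 1 else 0) n.

(* one step of protocol (C6); u j i = u_{ji}(t), b j i = b_{ji}(t) *)
Definition stepC6 (n : nat) (r w : nat -> R) (x : nat -> R)
    (u b : nat -> nat -> R) : nat -> R :=
  fun i => proj01 (w i * xave n x
             + (1 - w i) / card_nbr n r x i *
               (x i + rsum (fun j => if onbrb r x i j
                                      then x j + u j i + b j i else 0) n)).

(* A control strategy maps the history [x(0); ...; x(t)] to the choices at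
   time t:  delta h i = delta_i(t),  u h j i = u_{ji}(t).
   trajC6 ... t is the history [x(0); ...; x(t)] generated by the strategy
   u and the uncertainty sequence b t j i = b_{ji}(t). *)
Fixpoint trajC6 (n : nat) (r w : nat -> R) (x0 : nat -> R)
    (u : list (nat -> R) -> nat -> nat -> R) (b : nat -> nat -> nat -> R)
    (t : nat) : list (nat -> R) :=
  match t with
  | O => [x0]
  | S t' => let h := trajC6 n r w x0 u b t' in
            h ++ [stepC6 n r w (last h x0) (u h) (b t')]
  end.

Definition stateC6 n r w x0 u b t : nat -> R :=
  last (trajC6 n r w x0 u b t) x0.

Definition in_cube (n : nat) (x : nat -> R) : Prop :=
  forall i, (i < n)%nat -> 0 <= x i <= 1.

Definition in_S (n : nat) (zbar abar : R) (x : nat -> R) : Prop :=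
  in_cube n x /\ forall i, (i < n)%nat -> Rabs (x i - zbar) < abar.

Definition ft_robustly_reachable (n : nat) (r w : nat -> R) (eta : R)
    (S : (nat -> R) -> Prop) : Prop :=
  exists (T : nat) (eps : R), (0 < T)%nat /\ 0 < eps < eta /\
  forall x0 : nat -> R, in_cube n x0 ->
    S x0 \/
    exists (delta : list (nat -> R) -> nat -> R)
           (u : list (nat -> R) -> nat -> nat -> R),
      (forall h i, eps <= delta h i < eta) /\
      (forall h j i, - eta + delta h i <= u h j i <= eta - delta h i) /\
      forall b : nat -> nat -> nat -> R,
        (forall t i j, (t < T)%nat -> (i < n)%nat -> (j < n)%nat ->
           onbrb r (stateC6 n r w x0 u b t) i j = true ->
           - delta (trajC6 n r w x0 u b t) i <= b t j i
             <= delta (trajC6 n r w x0 u b t) i) ->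
        exists t, (1 <= t <= T)%nat /\ S (stateC6 n r w x0 u b t).

(* Main.v *)
Require Import Defs.
From Stdlib Require Import Reals List Lra Lia Classical.
Import ListNotations.
Open Scope R_scope.

Lemma rsum_ext f g m : (forall j, (j < m)%nat -> f j = g j) -> rsum f m = rsum g m.
Proof. induction m; intros H; simpl; auto. rewrite IHm by (intros; apply H; lia). rewrite H by lia. reflexivity. Qed.

Lemma rsum_plus f g m : rsum (fun j => f j + g j) m = rsum f m + rsum g m.
Proof. induction m; simpl; [lra|]. rewrite IHm. lra. Qed.

Lemma rsum_ind_bound (P : nat -> bool) f lo hi m :
  (forall j, (j < m)%nat -> P j = true -> lo <= f j <= hi) ->
  lo * rsum (fun j => if P j then 1 else 0) m <= rsum (fun j => if P j then f j else 0) m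
  <= hi * rsum (fun j => if P j then 1 else 0) m.
Proof.
  induction m; intros H; simpl; [lra|].
  assert (IH := IHm (fun j Hj => H j ltac:(lia))).
  destruct (P m) eqn:E.
  - specialize (H m ltac:(lia) E). rewrite !Rmult_plus_distr_l. lra.
  - rewrite !Rmult_plus_distr_l. lra.
Qed.

Lemma rsum_ind_nonneg (P : nat -> bool) m : 0 <= rsum (fun j => if P j then 1 else 0) m.
Proof. induction m; simpl; [lra|]. destruct (P m); lra. Qed.

Lemma rsum_ind_ge1 (P : nat -> bool) m :
  (exists j, (j < m)%nat /\ P j = true) -> 1 <= rsum (fun j => if P j then 1 else 0) m.
Proof.
  induction m; intros [j [Hj Pj]]; [lia|]. simpl.
  destruct (Nat.eq_dec j m).
  - subst. rewrite Pj. pose proof (rsum_ind_nonneg P m). lra.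
  - assert (1 <= rsum (fun j => if P j then 1 else 0) m) by (apply IHm; exists j; split; [lia|auto]).
    destruct (P m); lra.
Qed.

Lemma rsum_bound f lo hi m : (forall j, (j < m)%nat -> lo <= f j <= hi) ->
  lo * INR m <= rsum f m <= hi * INR m.
Proof.
  induction m; intros H; [simpl; lra|]. cbn [rsum].
  assert (IH := IHm (fun j Hj => H j ltac:(lia))). specialize (H m ltac:(lia)).
  rewrite S_INR, !Rmult_plus_distr_l. lra.
Qed.

Lemma rsum_eq0 i m : (m <= i)%nat -> rsum (fun j => if Nat.eqb j i then 1 else 0) m = 0.
Proof.
  induction m; intros H; simpl; [lra|]. rewrite IHm by lia.
  destruct (Nat.eqb m i) eqn:E; [apply Nat.eqb_eq in E; lia| lra].
Qed.

Lemma rsum_eq1 i m : (i < m)%nat -> rsum (fun j => if Nat.eqb j i then 1 else 0) m = 1.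
Proof.
  induction m; intros H; [lia|]. simpl.
  destruct (Nat.eq_dec i m).
  - subst. rewrite rsum_eq0 by lia. rewrite Nat.eqb_refl. lra.
  - rewrite IHm by lia. destruct (Nat.eqb m i) eqn:E; [apply Nat.eqb_eq in E; lia| lra].
Qed.

Lemma card_decomp n r x i : (i < n)%nat -> 0 <= r i ->
  card_nbr n r x i = rsum (fun j => if onbrb r x i j then 1 else 0) n + 1.
Proof.
  intros Hi Hr. unfold card_nbr.
  transitivity (rsum (fun j => if onbrb r x i j then 1 else 0) n +
     rsum (fun j => if Nat.eqb j i then 1 else 0) n);
  [| rewrite (rsum_eq1 i n Hi); reflexivity].
  rewrite <- rsum_plus. apply rsum_ext. intros j Hj. unfold onbrb.
  destruct (Nat.eqb j i) eqn:E; simpl.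
  - apply Nat.eqb_eq in E; subst. unfold nbrb. destruct Rle_dec; [lra|].
    exfalso; apply n0. replace (x i - x i) with 0 by ring. rewrite Rabs_R0. lra.
  - destruct (nbrb r x i j); lra.
Qed.

Lemma le_div a S N : 0 < N -> a * N <= S -> a <= S / N.
Proof.
  intros HN H. apply (Rmult_le_reg_r N); auto. unfold Rdiv.
  rewrite Rmult_assoc, Rinv_l by lra. lra.
Qed.

Lemma div_le a S N : 0 < N -> S <= a * N -> S / N <= a.
Proof.
  intros HN H. apply (Rmult_le_reg_r N); auto. unfold Rdiv.
  rewrite Rmult_assoc, Rinv_l by lra. lra.
Qed.

Lemma proj_mono a b : a <= b -> proj01 a <= proj01 b.
Proof. unfold proj01, Rmin, Rmax; intros; repeat destruct Rle_dec; lra. Qed.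
Lemma proj_bnd a : 0 <= proj01 a <= 1.
Proof. unfold proj01, Rmin, Rmax; intros; repeat destruct Rle_dec; lra. Qed.
Lemma proj_lip a b : a <= b -> proj01 b <= proj01 a + (b - a).
Proof. unfold proj01, Rmin, Rmax; intros; repeat destruct Rle_dec; lra. Qed.
Lemma proj_id a : 0 <= a <= 1 -> proj01 a = a.
Proof. unfold proj01, Rmin, Rmax; intros; repeat destruct Rle_dec; lra. Qed.
Lemma proj_le a : 0 <= a -> proj01 a <= a.
Proof. unfold proj01, Rmin, Rmax; intros; repeat destruct Rle_dec; lra. Qed.
Lemma proj_ge a : a <= 1 -> a <= proj01 a.
Proof. unfold proj01, Rmin, Rmax; intros; repeat destruct Rle_dec; lra. Qed.

Lemma fin_min (f : nat -> R) n : (forall i, (i < n)%nat -> 0 < f i) ->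
  exists c, 0 < c /\ forall i, (i < n)%nat -> c <= f i.
Proof.
  induction n; intros H.
  - exists 1. split; [lra| intros; lia].
  - destruct (IHn (fun i Hi => H i ltac:(lia))) as [c [Hc Hc2]].
    exists (Rmin c (f n)). split.
    + apply Rmin_pos; [auto | apply H; lia].
    + intros i Hi. destruct (Nat.eq_dec i n).
      * subst. apply Rmin_r.
      * eapply Rle_trans; [apply Rmin_l|]. apply Hc2; lia.
Qed.

Lemma master n r w x u2 b i s d lo hi :
  (i < n)%nat -> 0 <= r i -> 0 <= d ->
  (forall j, u2 j i = s) ->
  (forall j, (j < n)%nat -> lo <= x j <= hi) ->
  (forall j, (j < n)%nat -> onbrb r x i j = true -> - d <= b j i <= d) ->
  exists y q z, stepC6 n r w x u2 b i =
     proj01 (w i * xave n x + (1 - w i) * y + (1 - w i) * q * z)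
   /\ lo <= y <= hi /\ s - d <= z <= s + d /\ 0 <= q <= 1
   /\ ((exists j, (j < n)%nat /\ onbrb r x i j = true) -> / 2 <= q).
Proof.
  intros Hi Hr Hd Hu Hx Hb.
  set (K := rsum (fun j => if onbrb r x i j then 1 else 0) n).
  set (X := rsum (fun j => if onbrb r x i j then x j else 0) n).
  set (Z := rsum (fun j => if onbrb r x i j then s + b j i else 0) n).
  assert (HK : 0 <= K) by apply rsum_ind_nonneg.
  assert (HX : lo * K <= X <= hi * K).
  { apply rsum_ind_bound. intros j Hj _. auto. }
  assert (HZ : (s - d) * K <= Z <= (s + d) * K).
  { apply rsum_ind_bound. intros j Hj Hj2. specialize (Hb j Hj Hj2). lra. }
  assert (Hsum : rsum (fun j => if onbrb r x i j then x j + u2 j i + b j i else 0) n = X + Z).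
  { unfold X, Z. rewrite <- rsum_plus. apply rsum_ext. intros j _.
    rewrite Hu. destruct (onbrb r x i j); lra. }
  assert (Hc : card_nbr n r x i = K + 1) by (apply card_decomp; auto).
  exists ((x i + X) / (K + 1)), (K / (K + 1)),
    (if Req_EM_T K 0 then s else Z / K).
  assert (Hxi := Hx i Hi).
  split; [|split; [|split; [|split]]].
  - unfold stepC6. f_equal. rewrite Hc, Hsum.
    destruct (Req_EM_T K 0) as [E|E].
    + assert (Z = 0) by (rewrite E in HZ; lra). rewrite E, H. field.
    + field. lra.
  - split; [apply le_div | apply div_le]; lra.
  - destruct (Req_EM_T K 0) as [E|E]; [lra|].
    split; [apply le_div | apply div_le]; lra.
  - split; [apply le_div | apply div_le]; lra.
  - intros Hex. apply rsum_ind_ge1 in Hex. fold K in Hex. apply le_div; lra.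
Qed.

Lemma xave_bound n x lo hi : (0 < n)%nat -> (forall j, (j < n)%nat -> lo <= x j <= hi) ->
  lo <= xave n x <= hi.
Proof.
  intros Hn H. assert (HN : 0 < INR n) by (apply lt_0_INR; lia).
  destruct (rsum_bound x lo hi n H). unfold xave.
  split; [apply le_div | apply div_le]; lra.
Qed.

Lemma width_step n r w x u2 b s d k wm L l :
  (0 < n)%nat -> (forall i, (i < n)%nat -> 0 <= r i) ->
  (forall i, (i < n)%nat -> wm <= w i < 1) -> 0 <= wm -> 0 <= d ->
  (forall i j, u2 j i = s) -> Rabs s + d <= k -> 0 <= l ->
  (forall j, (j < n)%nat -> L <= x j <= L + l) ->
  (forall i j, (i < n)%nat -> (j < n)%nat -> onbrb r x i j = true -> - d <= b j i <= d) ->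
  exists L', forall i, (i < n)%nat ->
    L' <= stepC6 n r w x u2 b i <= L' + ((1 - wm) * l + 2 * k).
Proof.
  intros Hn Hr Hw Hwm Hd Hu Hk Hl Hx Hb.
  set (A := xave n x).
  assert (HA : L <= A <= L + l) by (apply xave_bound; auto).
  set (P := L + wm * (A - L) - k). set (Q := L + l - wm * (L + l - A) + k).
  exists (proj01 P). intros i Hi.
  destruct (master n r w x u2 b i s d L (L + l) Hi (Hr i Hi) Hd (fun j => Hu i j) Hx
     (fun j Hj => Hb i j Hi Hj)) as [y [q [z [Heq [Hy [Hz [Hq _]]]]]]].
  rewrite Heq. fold A.
  assert (Hwi := Hw i Hi).
  assert (Habs : - Rabs s <= s <= Rabs s).
  { split; [| apply Rle_abs]. pose proof (Rle_abs (- s)). rewrite Rabs_Ropp in H. lra. }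
  set (p := (1 - w i) * q).
  assert (Hp : 0 <= p <= 1) by (unfold p; split; nra).
  assert (Hzk : - k <= z <= k) by lra.
  assert (Hc : - k <= p * z <= k).
  { assert (0 <= p * (k - z)) by (apply Rmult_le_pos; lra).
    assert (0 <= p * (k + z)) by (apply Rmult_le_pos; lra).
    assert (0 <= (1 - p) * k) by (apply Rmult_le_pos; lra). nra. }
  replace ((1 - w i) * q * z) with (p * z) by (unfold p; ring).
  assert (H1 : 0 <= (w i - wm) * (A - L)) by (apply Rmult_le_pos; lra).
  assert (H2 : 0 <= (1 - w i) * (y - L)) by (apply Rmult_le_pos; lra).
  assert (H3 : 0 <= (w i - wm) * (L + l - A)) by (apply Rmult_le_pos; lra).
  assert (H4 : 0 <= (1 - w i) * (L + l - y)) by (apply Rmult_le_pos; lra).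
  assert (HP : P <= w i * A + (1 - w i) * y + p * z) by (unfold P; nra).
  assert (HQ : w i * A + (1 - w i) * y + p * z <= Q) by (unfold Q; nra).
  split.
  - apply proj_mono; auto.
  - eapply Rle_trans; [apply proj_mono; apply HQ|].
    eapply Rle_trans; [apply (proj_lip P Q); lra|]. unfold P, Q. lra.
Qed.

Definition nb (i : nat) : nat := if Nat.eqb i 0 then 1%nat else 0%nat.

Lemma nb_ok n r x i : (2 <= n)%nat -> (i < n)%nat ->
  (forall j, (j < n)%nat -> Rabs (x j - x i) <= r i) ->
  exists j, (j < n)%nat /\ onbrb r x i j = true.
Proof.
  intros Hn Hi H. exists (nb i). unfold nb.
  destruct (Nat.eqb i 0) eqn:E.
  - apply Nat.eqb_eq in E. subst. split; [lia|]. unfold onbrb, nbrb. simpl.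
    destruct Rle_dec as [|Hn0]; auto; exfalso; apply Hn0; apply H; lia.
  - apply Nat.eqb_neq in E. split; [lia|]. unfold onbrb, nbrb.
    destruct (Nat.eqb 0 i) eqn:E2; [apply Nat.eqb_eq in E2; lia|]. simpl.
    destruct Rle_dec as [|Hn0]; auto; exfalso; apply Hn0; apply H; lia.
Qed.

Lemma up_step n r w x u2 b i g d om lo hi :
  (2 <= n)%nat -> (i < n)%nat -> 0 <= r i -> 0 < w i < 1 -> 0 < om <= 1 - w i ->
  0 <= d <= g - d -> (forall j, u2 j i = g) ->
  (forall j, (j < n)%nat -> lo <= x j <= hi) ->
  (forall j, (j < n)%nat -> Rabs (x j - x i) <= r i) ->
  (forall j, (j < n)%nat -> onbrb r x i j = true -> - d <= b j i <= d) ->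
  proj01 (lo + om * (g - d) / 2) <= stepC6 n r w x u2 b i <= proj01 (hi + (g + d)).
Proof.
  intros Hn Hi Hr Hw Hom Hd Hu Hx Hnb Hb.
  destruct (master n r w x u2 b i g d lo hi Hi Hr ltac:(lra) Hu Hx Hb)
    as [y [q [z [Heq [Hy [Hz [Hq Hq2]]]]]]].
  specialize (Hq2 (nb_ok n r x i Hn Hi Hnb)).
  assert (HA : lo <= xave n x <= hi) by (apply xave_bound; auto; lia).
  rewrite Heq. set (A := xave n x) in *.
  assert (H1 : 0 <= w i * (A - lo)) by (apply Rmult_le_pos; lra).
  assert (H2 : 0 <= (1 - w i) * (y - lo)) by (apply Rmult_le_pos; lra).
  assert (H3 : 0 <= w i * (hi - A)) by (apply Rmult_le_pos; lra).
  assert (H4 : 0 <= (1 - w i) * (hi - y)) by (apply Rmult_le_pos; lra).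
  assert (H5 : om * / 2 <= (1 - w i) * q) by (apply Rmult_le_compat; lra).
  assert (H6 : om * / 2 * (g - d) <= (1 - w i) * q * z) by (apply Rmult_le_compat; nra).
  assert (H7 : (1 - w i) * q <= 1) by nra.
  assert (H8 : (1 - w i) * q * z <= g + d) by nra.
  split; apply proj_mono; lra.
Qed.

Lemma down_step n r w x u2 b i g d om lo hi :
  (2 <= n)%nat -> (i < n)%nat -> 0 <= r i -> 0 < w i < 1 -> 0 < om <= 1 - w i ->
  0 <= d <= g - d -> (forall j, u2 j i = - g) ->
  (forall j, (j < n)%nat -> lo <= x j <= hi) ->
  (forall j, (j < n)%nat -> Rabs (x j - x i) <= r i) ->
  (forall j, (j < n)%nat -> onbrb r x i j = true -> - d <= b j i <= d) ->
  proj01 (lo - (g + d)) <= stepC6 n r w x u2 b i <= proj01 (hi - om * (g - d) / 2).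
Proof.
  intros Hn Hi Hr Hw Hom Hd Hu Hx Hnb Hb.
  destruct (master n r w x u2 b i (- g) d lo hi Hi Hr ltac:(lra) Hu Hx Hb)
    as [y [q [z [Heq [Hy [Hz [Hq Hq2]]]]]]].
  specialize (Hq2 (nb_ok n r x i Hn Hi Hnb)).
  assert (HA : lo <= xave n x <= hi) by (apply xave_bound; auto; lia).
  rewrite Heq. set (A := xave n x) in *.
  assert (H1 : 0 <= w i * (A - lo)) by (apply Rmult_le_pos; lra).
  assert (H2 : 0 <= (1 - w i) * (y - lo)) by (apply Rmult_le_pos; lra).
  assert (H3 : 0 <= w i * (hi - A)) by (apply Rmult_le_pos; lra).
  assert (H4 : 0 <= (1 - w i) * (hi - y)) by (apply Rmult_le_pos; lra).
  assert (H5 : om * / 2 <= (1 - w i) * q) by (apply Rmult_le_compat; lra).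
  assert (H6 : om * / 2 * (g - d) <= (1 - w i) * q * (- z)) by (apply Rmult_le_compat; nra).
  assert (H7 : (1 - w i) * q <= 1) by nra.
  assert (H8 : (1 - w i) * q * (- z) <= g + d) by nra.
  split; apply proj_mono; lra.
Qed.

Lemma stateS n r w x0 u b t :
  stateC6 n r w x0 u b (S t) =
  stepC6 n r w (stateC6 n r w x0 u b t) (u (trajC6 n r w x0 u b t)) (b t).
Proof. unfold stateC6 at 1. cbn [trajC6]. rewrite last_last. reflexivity. Qed.

Lemma Rabs_le_inv a b : Rabs a <= b -> - b <= a <= b.
Proof. unfold Rabs; destruct Rcase_abs; intros; lra. Qed.

Theorem lemma7 (n : nat) (r w : nat -> R) (eta : R)
  (Hn : (3 <= n)%nat)
  (Hr : forall i, (i < n)%nat -> 0 < r i <= 1)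
  (Hw : forall i, (i < n)%nat -> 0 < w i < 1)
  (Heta : 0 < eta)
  (zbar abar : R) (Hz : 0 <= zbar <= 1) (Ha : 0 < abar) :
  ft_robustly_reachable n r w eta (in_S n zbar abar).
Proof.
  destruct (fin_min w n (fun i Hi => proj1 (Hw i Hi))) as [wm [Hwm Hwm2]].
  destruct (fin_min (fun i => 1 - w i) n (fun i Hi => ltac:(specialize (Hw i Hi); lra)))
    as [om [Hom Hom2]].
  destruct (fin_min r n (fun i Hi => proj1 (Hr i Hi))) as [rho [Hrho Hrho2]].
  assert (Hw0 := Hw 0%nat ltac:(lia)).
  assert (Hwm1 : wm < 1) by (specialize (Hwm2 0%nat ltac:(lia)); lra).
  assert (Hom1 : om < 1) by (specialize (Hom2 0%nat ltac:(lia)); lra).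
  set (th := Rmin rho (abar / 4)).
  assert (Hth : 0 < th) by (apply Rmin_pos; lra).
  assert (Hth1 : th <= rho) by apply Rmin_l.
  assert (Hth2 : th <= abar / 4) by apply Rmin_r.
  set (d := Rmin (eta / 4) (wm * th / 12)).
  assert (Hd : 0 < d) by (apply Rmin_pos; [lra| apply Rmult_lt_0_compat; [nra|lra]]).
  assert (Hd1 : d <= eta / 4) by apply Rmin_l.
  assert (Hd2 : d <= wm * th / 12) by apply Rmin_r.
  assert (Hwth : wm * th <= th) by nra.
  set (mu := om * (2 * d - d) / 2).
  assert (Hmu : 0 < mu) by (unfold mu; apply Rmult_lt_0_compat; [nra|lra]).
  assert (Hmu2 : mu <= d / 2) by (unfold mu; nra).
  destruct (pow_lt_1_zero (1 - wm) ltac:(rewrite Rabs_right; lra) (th / 2) ltac:(lra))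
    as [t0 Ht0].
  destruct (INR_unbounded (/ mu)) as [N HN].
  assert (HN1 : 1 < INR N * mu).
  { apply (Rmult_lt_compat_r mu) in HN; auto. rewrite Rinv_l in HN; lra. }
  assert (HNpos : (0 < N)%nat).
  { destruct N; [simpl in HN1; lra| lia]. }
  set (T := (t0 + N)%nat).
  exists T, d. split; [unfold T; lia|]. split; [lra|].
  intros x0 Hx0.
  destruct (classic (in_S n zbar abar x0)) as [HS|HS]; [left; auto| right].
  set (u := fun (h : list (nat -> R)) (j i : nat) =>
              if Rlt_dec (last h x0 0%nat) zbar then 2 * d else - (2 * d)).
  exists (fun _ _ => d), u. split; [intros; lra|]. split.
  { intros h j i. unfold u. destruct Rlt_dec; lra. }
  intros b Hb.
  destruct (classic (exists t, (1 <= t <= T)%nat /\ in_S n zbar abar (stateC6 n r w x0 u b t)))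
    as [Hex|Hnex]; [exact Hex|exfalso].
  set (X := stateC6 n r w x0 u b).
  assert (F0 : X 0%nat = x0) by reflexivity.
  assert (F2 : forall t, in_cube n (X t)).
  { intros [|t]; [exact Hx0|]. intros i Hi. unfold X. rewrite stateS. apply proj_bnd. }
  assert (F5 : forall t, (t <= T)%nat -> ~ in_S n zbar abar (X t)).
  { intros [|t] Ht HSt; [exact (HS HSt)|]. apply Hnex. exists (S t). split; [lia|exact HSt]. }
  assert (Hbt : forall t i j, (t < T)%nat -> (i < n)%nat -> (j < n)%nat ->
            onbrb r (X t) i j = true -> - d <= b t j i <= d).
  { intros. apply (Hb t i j); auto. }
  assert (Hk : 0 <= 3 * d) by lra.
  assert (F3 : forall t, (t <= T)%nat -> exists L, forall i, (i < n)%nat ->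
              L <= X t i <= L + ((1 - wm) ^ t + 2 * (3 * d) / wm)).
  { induction t; intros Ht.
    - exists 0. intros i Hi. destruct (Hx0 i Hi). simpl.
      assert (0 <= 2 * (3 * d) / wm) by (unfold Rdiv; apply Rmult_le_pos; [lra| left; apply Rinv_0_lt_compat; lra]).
      rewrite F0. lra.
    - destruct (IHt ltac:(lia)) as [L HL].
      assert (Hl : 0 <= (1 - wm) ^ t + 2 * (3 * d) / wm).
      { assert (0 <= 2 * (3 * d) / wm) by (unfold Rdiv; apply Rmult_le_pos; [lra| left; apply Rinv_0_lt_compat; lra]).
        assert (0 <= (1 - wm) ^ t) by (apply pow_le; lra). lra. }
      destruct (width_step n (fun i => r i) w (X t) (u (trajC6 n r w x0 u b t)) (b t)
         (if Rlt_dec (X t 0%nat) zbar then 2 * d else - (2 * d)) d (3 * d) wm L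
         ((1 - wm) ^ t + 2 * (3 * d) / wm) ltac:(lia)
         (fun i Hi => ltac:(specialize (Hr i Hi); lra))
         (fun i Hi => ltac:(specialize (Hwm2 i Hi); specialize (Hw i Hi); lra))
         ltac:(lra) ltac:(lra) (fun i j => eq_refl)
         ltac:(destruct Rlt_dec; [rewrite Rabs_right | rewrite Rabs_left]; lra)
         Hl HL (fun i j Hi Hj => Hbt t i j ltac:(lia) Hi Hj)) as [L' HL'].
      exists L'. intros i Hi. unfold X. rewrite stateS. fold X.
      replace ((1 - wm) ^ S t + 2 * (3 * d) / wm) with
        ((1 - wm) * ((1 - wm) ^ t + 2 * (3 * d) / wm) + 2 * (3 * d))
        by (simpl; field; lra).
      apply HL'; auto. }
  assert (F4 : forall t, (t0 <= t <= T)%nat -> exists L, forall i, (i < n)%nat ->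
              L <= X t i <= L + th).
  { intros t Ht. destruct (F3 t ltac:(lia)) as [L HL]. exists L.
    assert (H1 : (1 - wm) ^ t < th / 2).
    { specialize (Ht0 t ltac:(lia)). eapply Rle_lt_trans; [apply Rle_abs| exact Ht0]. }
    assert (H2 : 2 * (3 * d) / wm <= th / 2) by (apply div_le; lra).
    intros i Hi. specialize (HL i Hi). lra. }
  assert (Fnb : forall t i j, (t0 <= t <= T)%nat -> (i < n)%nat -> (j < n)%nat ->
             Rabs (X t j - X t i) <= th).
  { intros t i j Ht Hi Hj. destruct (F4 t Ht) as [L HL].
    assert (HLj := HL j Hj). specialize (HL i Hi). apply Rabs_le. lra. }
  assert (F6 : forall t, (t0 <= t <= T)%nat -> abar / 2 <= Rabs (X t 0%nat - zbar)).
  { intros t Ht. destruct (Rle_lt_dec (abar / 2) (Rabs (X t 0%nat - zbar))) as [H|H]; auto.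
    exfalso. apply (F5 t ltac:(lia)). split; [apply F2|]. intros i Hi.
    replace (X t i - zbar) with ((X t i - X t 0%nat) + (X t 0%nat - zbar)) by ring.
    eapply Rle_lt_trans; [apply Rabs_triang|].
    specialize (Fnb t 0%nat i Ht ltac:(lia) Hi). lra. }
  assert (Hrr : forall i, (i < n)%nat -> th <= r i) by (intros i Hi; specialize (Hrho2 i Hi); lra).
  assert (Ht0T : (t0 <= t0 <= T)%nat) by (unfold T; lia).
  assert (HF6 := F6 t0 Ht0T).
  destruct (Rle_lt_dec (X t0 0%nat) zbar) as [Hup|Hdn].
  -
    assert (Hup' : X t0 0%nat <= zbar - abar / 2).
    { revert HF6. unfold Rabs. destruct Rcase_abs; lra. }
    assert (Ind : forall k, (t0 + k <= T)%nat -> X (t0 + k)%nat 0%nat <= zbar - abar / 2 /\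
                 forall i, (i < n)%nat -> INR k * mu <= X (t0 + k)%nat i).
    { induction k; intros Hk'.
      - rewrite Nat.add_0_r. split; auto. intros i Hi. simpl. destruct (F2 t0 i Hi). lra.
      - destruct (IHk ltac:(lia)) as [IH1 IH2].
        set (t := (t0 + k)%nat) in *.
        replace (t0 + S k)%nat with (S t) by (unfold t; lia).
        assert (Hu : forall j i, u (trajC6 n r w x0 u b t) j i = 2 * d).
        { intros j i. unfold u at 1. change (last (trajC6 n r w x0 u b t) x0 0%nat) with (X t 0%nat).
          destruct Rlt_dec; lra. }
        assert (Hbound : forall i, (i < n)%nat ->
           proj01 (INR k * mu + om * (2 * d - d) / 2) <= X (S t) i <=
           proj01 (X t 0%nat + th + (2 * d + d))).
        { intros i Hi. rewrite (stateS n r w x0 u b t : X (S t) = _).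
          apply (up_step n r w (X t) _ (b t) i (2 * d) d om).
          + lia.
          + exact Hi.
          + specialize (Hr i Hi); lra.
          + apply Hw; auto.
          + split; [exact Hom| apply Hom2; auto].
          + lra.
          + intros j; apply Hu.
          + intros j Hj. split; [apply IH2; auto|].
            specialize (Fnb t 0%nat j ltac:(unfold t; lia) ltac:(lia) Hj).
            apply Rabs_le_inv in Fnb. lra.
          + intros j Hj. eapply Rle_trans; [apply Fnb; auto; unfold t; lia| apply Hrr; auto].
          + intros j Hj Ho. apply (Hbt t i j); auto; unfold t; lia. }
        assert (HX0 := IH2 0%nat ltac:(lia)).
        assert (Hlo : proj01 (INR k * mu + om * (2 * d - d) / 2) = INR k * mu + mu).
        { fold mu. apply proj_id. split; [|lra].
          assert (0 <= INR k) by apply pos_INR. nra. }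
        assert (Hhi : proj01 (X t 0%nat + th + (2 * d + d)) <= X t 0%nat + th + (2 * d + d)).
        { apply proj_le. destruct (F2 t 0%nat ltac:(lia)). lra. }
        split.
        + destruct (Hbound 0%nat ltac:(lia)) as [_ B].
          assert (B' : X (S t) 0%nat < zbar) by lra.
          specialize (F6 (S t) ltac:(unfold t; lia)). revert F6. unfold Rabs.
          destruct Rcase_abs; lra.
        + intros i Hi. destruct (Hbound i Hi) as [B _]. rewrite S_INR. lra. }
    destruct (Ind N ltac:(unfold T; lia)) as [I1 I2].
    specialize (I2 0%nat ltac:(lia)). lra.
  -
    assert (Hdn' : zbar + abar / 2 <= X t0 0%nat).
    { revert HF6. unfold Rabs. destruct Rcase_abs; lra. }
    assert (Ind : forall k, (t0 + k <= T)%nat -> zbar + abar / 2 <= X (t0 + k)%nat 0%nat /\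
                 forall i, (i < n)%nat -> X (t0 + k)%nat i <= 1 - INR k * mu).
    { induction k; intros Hk'.
      - rewrite Nat.add_0_r. split; auto. intros i Hi. simpl. destruct (F2 t0 i Hi). lra.
      - destruct (IHk ltac:(lia)) as [IH1 IH2].
        set (t := (t0 + k)%nat) in *.
        replace (t0 + S k)%nat with (S t) by (unfold t; lia).
        assert (Hu : forall j i, u (trajC6 n r w x0 u b t) j i = - (2 * d)).
        { intros j i. unfold u at 1. change (last (trajC6 n r w x0 u b t) x0 0%nat) with (X t 0%nat).
          destruct Rlt_dec; lra. }
        assert (Hbound : forall i, (i < n)%nat ->
           proj01 (X t 0%nat - th - (2 * d + d)) <= X (S t) i <=
           proj01 (1 - INR k * mu - om * (2 * d - d) / 2)).
        { intros i Hi. rewrite (stateS n r w x0 u b t : X (S t) = _).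
          apply (down_step n r w (X t) _ (b t) i (2 * d) d om).
          + lia.
          + exact Hi.
          + specialize (Hr i Hi); lra.
          + apply Hw; auto.
          + split; [exact Hom| apply Hom2; auto].
          + lra.
          + intros j; apply Hu.
          + intros j Hj. split; [|apply IH2; auto].
            specialize (Fnb t 0%nat j ltac:(unfold t; lia) ltac:(lia) Hj).
            apply Rabs_le_inv in Fnb. lra.
          + intros j Hj. eapply Rle_trans; [apply Fnb; auto; unfold t; lia| apply Hrr; auto].
          + intros j Hj Ho. apply (Hbt t i j); auto; unfold t; lia. }
        assert (HX0 := IH2 0%nat ltac:(lia)).
        assert (Hhi : proj01 (1 - INR k * mu - om * (2 * d - d) / 2) = 1 - INR k * mu - mu).
        { fold mu. apply proj_id. split; [lra|].
          assert (0 <= INR k) by apply pos_INR. nra. }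
        assert (Hlo : X t 0%nat - th - (2 * d + d) <= proj01 (X t 0%nat - th - (2 * d + d))).
        { apply proj_ge. destruct (F2 t 0%nat ltac:(lia)). lra. }
        split.
        + destruct (Hbound 0%nat ltac:(lia)) as [B _].
          assert (B' : zbar < X (S t) 0%nat) by lra.
          specialize (F6 (S t) ltac:(unfold t; lia)). revert F6. unfold Rabs.
          destruct Rcase_abs; lra.
        + intros i Hi. destruct (Hbound i Hi) as [_ B]. rewrite S_INR. lra. }
    destruct (Ind N ltac:(unfold T; lia)) as [I1 I2].
    specialize (I2 0%nat ltac:(lia)). lra.
Qed.
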